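(* Let $G=(V,E)$ be a graph with a partition $(V_1,V_2)$ of $V$ such that $G[V_1]$ and $G[V_2]$ are $P_5$-free. Let $X\subseteq V_2$ be such that no vertex of $X$ has a neighbour in $V_1$ and exactly one vertex of $V_2\setminus X$ has a neighbour in $X$. If there exists a set $F\subseteq V_2$ such that $G\setminus F$ is $P_5$-free and $F\cap X\neq\emptyset$, then there exists a set $F'\subseteq V_2$ such that $G\setminus F'$ is $P_5$-free, $F'\cap X=\emptyset$, and $|F'|\le|F|$.
   Context: Graphs are finite, simple and undirected. A $P_5$ is a path on $5$ vertices (as a not necessarily induced subgraph); a graph is $P_5$-free if it contains no $P_5$. $G[X]$ denotes the subgraph induced by $X$, and $G\setminus F=G[V\setminus F]$. *)

(* Defs.v *)
From mathcomp Require Import all_boot.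
Set Implicit Arguments. Unset Strict Implicit. Unset Printing Implicit Defensive.

Definition simple_graph (T : finType) (e : rel T) : Prop :=
  symmetric e /\ irreflexive e.

(* G[S] contains a P5 (as a not necessarily induced subgraph): five distinct
   vertices v0..v4 of S with v_i v_{i+1} an edge for i < 4. *)
Definition has_P5_in (T : finType) (e : rel T) (S : {set T}) : Prop :=
  exists v : 'I_5 -> T,
    injective v /\ (forall i, v i \in S) /\
    (forall i j : 'I_5, val j = (val i).+1 -> e (v i) (v j)).

Definition P5_free_in (T : finType) (e : rel T) (S : {set T}) : Prop :=
  ~ has_P5_in e S.

(* Main.v *)
Require Import Defs.
From mathcomp Require Import all_boot.

(* V1 and V2 := ~: V1 partition V; G \ F is G[~: F]. *)
Theorem lemma7 (T : finType) (e : rel T) (V1 X F : {set T}) :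
  simple_graph e ->
  P5_free_in e V1 ->
  P5_free_in e (~: V1) ->
  X \subset ~: V1 ->
  (forall x y, x \in X -> y \in V1 -> ~~ e x y) ->
  (exists! u, u \in (~: V1) :\: X /\ exists2 x, x \in X & e u x) ->
  F \subset ~: V1 ->
  P5_free_in e (~: F) ->
  F :&: X != set0 ->
  exists F' : {set T},
    [/\ F' \subset ~: V1, P5_free_in e (~: F'), F' :&: X = set0 & #|F'| <= #|F|].
Proof.
move=> [esym eirr] _ H2 XV2 XV1 [u [[uV uadj] uuniq]] FV2 HF FX.
move: uV; rewrite inE => /andP [uX uV2].
exists ((F :\: X) :|: [set u]); split.
- apply/subsetP => y; rewrite !inE => /orP [/andP [_ yF]|/eqP ->].
    by move/subsetP: FV2 => /(_ y yF); rewrite inE.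
  by rewrite inE in uV2.
- move=> [v [vinj [vin vadj]]].
  have key : forall a b, e a b -> a \in X -> b \notin X -> b != u -> False.
    move=> a b eab aX bX bu.
    case: (boolP (b \in V1)) => bV1.
      by move: (XV1 a b aX bV1); rewrite eab.
    move/negP: bu; apply; apply/eqP; symmetry; apply: uuniq; split.
      by rewrite !inE bX bV1.
    by exists a => //; rewrite esym.
  have notu : forall i, v i != u.
    move=> i; move: (vin i); rewrite !inE negb_or => /andP [_].
    by rewrite eq_sym.
  have step : forall i j : 'I_5, val j = (val i).+1 -> (v i \in X) = (v j \in X).
    move=> i j hij; move: (vadj i j hij) => eij.
    case: (boolP (v i \in X)) => hi; case: (boolP (v j \in X)) => hj //.
      by exfalso; apply: (key _ _ eij hi hj (notu j)).
    by exfalso; apply: (key (v j) (v i) _ hj hi (notu i)); rewrite esym.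
  have all0 : forall n (hn : n < 5), (v (Ordinal hn) \in X) = (v ord0 \in X).
    elim=> [|n IH] hn.
      by congr (v _ \in X); apply: val_inj.
    rewrite -(IH (ltnW hn)); symmetry; exact: step.
  have allX : forall i, (v i \in X) = (v ord0 \in X).
    by case=> n hn; exact: all0.
  case: (boolP (v ord0 \in X)) => h0.
    apply: H2; exists v; split => //; split => // i.
    by move/subsetP: XV2; apply; rewrite allX.
  apply: HF; exists v; split => //; split => // i.
  move: (vin i); rewrite !inE negb_or => /andP [].
  by rewrite negb_and negbK allX (negbTE h0) => /orP [].
- apply/setP => y; rewrite !inE.
  case: (boolP (y \in X)) => yX; last by rewrite !andbF.
  rewrite andbT /=; apply/negP => H.
  move: H; rewrite ?yX /= => H; idtac.
  by move/eqP: H => yu; rewrite -yu yX in uX.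
- rewrite setUC (cardsU1 u) -(cardsID X F) leq_add2r.
  case: (u \in F :\: X) => //=.
  by rewrite card_gt0.
Qed.
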